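(* In the noisy search problem with $1/\delta=2^L$ using the $dyaPM$ strategy described in the context, for every level $l<L$ the nested log-likelihood $U^{\{l\}}(t)$ is a submartingale; more precisely, for all $t>0$, $$\mathbb{E}[U^{\{l\}}(t+1)\mid\pi(t)]-U^{\{l\}}(t)\ge K_d:=\min\Big\{\min_{\rho\in[0,1/4]}\max\{f(\rho),g(\rho)\},\ \min_{\rho\in[1/4,1/2]}f(\rho),\ \tfrac14 D\big(\tfrac14 B_1+\tfrac34 B_0\,\|\,B_0\big)\Big\}>0,$$ where $B_1=\mathrm{Bern}(1-p[1/2])$, $B_0=\mathrm{Bern}(p[1/2])$, $f(\rho)=\rho\,D\big(B_1\,\|\,\tfrac34B_1+\tfrac14B_0\big)$, and $g(\rho)=(\tfrac12-\rho)\,D\big((1-4\rho)B_1+4\rho B_0\,\|\,(\tfrac12+\rho)B_1+(\tfrac12-\rho)B_0\big)$.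
   Context: Search problem: fix $\delta\in(0,1)$ with $N=1/\delta=2^L$, $L$ an integer. A target index $\theta$ is uniform on $\{1,\dots,N\}$. A noise profile $p:(0,1)\to(0,1/2)$ is continuous and non-decreasing; $p[x]:=p(x)$. At each time $t$ a query set $S_t$ is chosen from the past and one observes $Y_t=\mathbb{1}(\theta\in S_t)\oplus Z_t$ with, conditionally on $S_t$, $Z_t\sim\mathrm{Bern}(p[\delta|S_t|])$ conditionally i.i.d. across time. Posterior $\pi_i(t)=\mathbb{P}(\theta=i\mid S_1^t,Y_1^t)$, $\pi_i(0)=\delta$; $\pi_S=\sum_{i\in S}\pi_i$, $\pi_{[a,b]}=\sum_{i=a}^b\pi_i$. $dyaPM$: $H_l^m=\{m2^{L-l}+1,\dots,(m+1)2^{L-l}\}$ for $l=0,\dots,L$, $m=0,\dots,2^l-1$. At time $t$, $l^*_t$ is the largest $l$ with $\max_m\pi_{H_l^m}(t)\ge\tfrac12$, $m^*_t=\arg\max_m\pi_{H^m_{l^*_t}}(t)$, $d=m^*_t2^{L-l^*_t}+1$, $k^*=\arg\min_k|\pi_{[d,k]}(t)-\tfrac12|$, and $S_{t+1}=\{d,\dots,k^*\}$. Nested log-likelihood: for $q=1,\dots,2^l$, $\mathrm{bin}(q)=\{(q-1)2^{L-l}+1,\dots,q2^{L-l}\}$, $\pi^{\{l\}}_q(t)=\sum_{i\in\mathrm{bin}(q)}\pi_i(t)$, $U^{\{l\}}(t)=\sum_{q=1}^{2^l}\pi^{\{l\}}_q(t)\log\frac{\pi^{\{l\}}_q(t)}{1-\pi^{\{l\}}_q(t)}$.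 $D(\cdot\|\cdot)$ is KL divergence; convex combinations of Bernoulli distributions denote mixtures. *)

(* Defs.v *)
From HB Require Import structures.
From mathcomp Require Import all_boot all_order all_algebra.
From mathcomp Require Import boolp classical_sets reals topology normedtype exp.
Set Implicit Arguments. Unset Strict Implicit. Unset Printing Implicit Defensive.
Import Order.TTheory GRing.Theory Num.Theory.
Local Open Scope ring_scope.

(* Indices are 0-based: item i (0 <= i < N) here is item i+1 of the paper.
   A posterior is a function pi : nat -> R (only 0 <= i < N = 2^L matters). *)

Section Search.
Variable R : realType.

Definition NN (L : nat) : nat := (2 ^ L)%N.
Definition delta (L : nat) : R := (NN L)%:R^-1.

Definition mass (pi : nat -> R) (a b : nat) : R := \sum_(a <= i < b) pi i.

Definition massH (L : nat) (pi : nat -> R) (l m : nat) : R :=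
  mass pi (m * 2 ^ (L - l))%N (m.+1 * 2 ^ (L - l))%N.

Definition lstar (L : nat) (pi : nat -> R) : nat :=
  \max_(l < L.+1 | [exists m : 'I_(2 ^ l), 2^-1 <= massH L pi l m]) (l : nat).

(* m*_t : argmax_m pi_{H_{l*}^m}; ties broken towards the smallest m *)
Definition mstar (L : nat) (pi : nat -> R) : nat :=
  let l := lstar L pi in
  find (fun m => [forall m' : 'I_(2 ^ l), massH L pi l m' <= massH L pi l m])
       (iota 0 (2 ^ l)).

Definition dstart (L : nat) (pi : nat -> R) : nat :=
  (mstar L pi * 2 ^ (L - lstar L pi))%N.

(* k* : argmin_{k >= d} | pi_{[d,k]} - 1/2 |, ties broken towards smallest k *)
Definition kstar (L : nat) (pi : nat -> R) : nat :=
  let d := dstart L pi in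
  let c k := `|mass pi d k.+1 - 2^-1| in
  (d + find (fun k => [forall k' : 'I_(NN L), (d <= k')%N ==> (c k <= c k')%R])
            (iota d (NN L - d)))%N.

Definition inS (L : nat) (pi : nat -> R) (i : nat) : bool :=
  (dstart L pi <= i <= kstar L pi)%N.
Definition sizeS (L : nat) (pi : nat -> R) : nat := (kstar L pi).+1 - dstart L pi.

(* P(Y = y | theta = i) for the dyaPM query: Y = 1(theta in S) xor Z,
   Z ~ Bern(p[delta |S|]) *)
Definition lik (p : R -> R) (L : nat) (pi : nat -> R) (y : bool) (i : nat) : R :=
  let q := p (delta L * (sizeS L pi)%:R) in
  if y == inS L pi i then 1 - q else q.

Definition predY (p : R -> R) (L : nat) (pi : nat -> R) (y : bool) : R :=
  \sum_(0 <= j < NN L) pi j * lik p L pi y j.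

Definition update (p : R -> R) (L : nat) (pi : nat -> R) (y : bool) : nat -> R :=
  fun i => pi i * lik p L pi y i / predY p L pi y.

Definition prior (L : nat) : nat -> R := fun _ => delta L.

Definition posterior (p : R -> R) (L : nat) (ys : seq bool) : nat -> R :=
  foldl (update p L) (prior L) ys.

Definition binmass (L : nat) (pi : nat -> R) (l q : nat) : R := massH L pi l q.
Definition Unest (L l : nat) (pi : nat -> R) : R :=
  \sum_(0 <= q < 2 ^ l) binmass L pi l q * ln (binmass L pi l q / (1 - binmass L pi l q)).

Definition EnextU (p : R -> R) (L l : nat) (pi : nat -> R) : R :=
  \sum_(y : bool) predY p L pi y * Unest L l (update p L pi y).

Definition klB (a b : R) : R :=
  a * ln (a / b) + (1 - a) * ln ((1 - a) / (1 - b)).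

(* parameter of the mixture lam B1 + (1 - lam) B0, B1 = Bern(1 - a), B0 = Bern(a) *)
Definition mixp (a lam : R) : R := lam * (1 - a) + (1 - lam) * a.

Definition fK (p : R -> R) (rho : R) : R :=
  let a := p 2^-1 in rho * klB (1 - a) (mixp a (3/4)).
Definition gK (p : R -> R) (rho : R) : R :=
  let a := p 2^-1 in
  (2^-1 - rho) * klB (mixp a (1 - 4 * rho)) (mixp a (2^-1 + rho)).

Definition Kd (p : R -> R) : R :=
  let a := p 2^-1 in
  Num.min (inf [set x | exists2 rho, 0 <= rho <= 4^-1 & x = Num.max (fK p rho) (gK p rho)])
    (Num.min (inf [set x | exists2 rho, 4^-1 <= rho <= 2^-1 & x = fK p rho])
             (4^-1 * klB (mixp a (4^-1)) a)).

End Search.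

(* Main.v *)
Require Import Defs.
From HB Require Import structures.
From mathcomp Require Import all_boot all_order all_algebra.
From mathcomp Require Import boolp classical_sets reals topology normedtype exp.
From mathcomp Require Import ring lra.
Import Order.TTheory GRing.Theory Num.Theory numFieldNormedType.Exports.
Local Open Scope ring_scope.
Set Implicit Arguments. Unset Strict Implicit.

Section KL.
Variable R : realType.
Implicit Types u v a b x : R.

Definition kterm u v : R := u * ln (u / v).

Lemma ln_ge1V (z : R) : 0 < z -> 1 - z^-1 <= ln z.
Proof.
move=> z0.
have h := @le_ln1Dx R (z^-1 - 1).
have : -1 < z^-1 - 1 by have := invr_gt0 z; rewrite z0 => /= ?; lra.
move/h; rewrite addrC subrK lnV ?posrE // => H; lra.
Qed.

Lemma ln_lt_sub1 (w : R) : 0 < w -> w != 1 -> ln w < w - 1.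
Proof.
move=> w0 w1.
have hy : ln w != 0 by rewrite ln_eq0.
have := expR_gt1Dx hy; rewrite lnK ?posrE // => H; lra.
Qed.

Lemma kterm0 v : kterm 0 v = 0.
Proof. by rewrite /kterm mul0r. Qed.

Lemma kterm_ge u v : 0 <= u -> 0 < v -> u - v <= kterm u v.
Proof.
move=> u0 v0; rewrite /kterm; case: (eqVneq u 0) => [->|un0]; first by rewrite mul0r; lra.
have up : 0 < u by rewrite lt_def un0.
have := ln_ge1V (divr_gt0 up v0); rewrite invf_div => H.
have E : u * (1 - v / u) = u - v by field; rewrite gt_eqF.
rewrite -E; by rewrite ler_wpM2l // ltW.
Qed.

Lemma kterm_gt u v : 0 < u -> 0 < v -> u != v -> u - v < kterm u v.
Proof.
move=> up v0 uv; rewrite /kterm.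
have w0 : 0 < v / u by rewrite divr_gt0.
have w1 : v / u != 1.
  apply/eqP => E; have : v = v / u * u by rewrite divfK ?gt_eqF.
  by rewrite E mul1r => V; rewrite V eqxx in uv.
have := ln_lt_sub1 w0 w1; rewrite -[v / u]invf_div lnV ?posrE ?divr_gt0 // => H.
have H2 : 1 - v / u < ln (u / v) by lra.
have E : u * (1 - v / u) = u - v by field; rewrite gt_eqF.
rewrite -E; by rewrite ltr_pM2l.
Qed.



Lemma kt_aux a b (A B : R) : 0 <= a -> 0 < b -> 0 < A -> 0 < B ->
  a * ln (A / B) + a - b * (A / B) <= kterm a b.
Proof.
move=> a0 b0 A0 B0; case: (eqVneq a 0) => [->|an0].
  rewrite kterm0 mul0r add0r sub0r oppr_le0; apply: mulr_ge0; first exact: ltW.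
  by apply: ltW; apply: divr_gt0.
have ap : 0 < a by rewrite lt_def an0.
have AB : 0 < A / B by apply: divr_gt0.
have bAB : 0 < b * (A / B) by apply: mulr_gt0.
have := kterm_ge (ltW ap) bAB; rewrite /kterm.
have -> : a / (b * (A / B)) = (a / b) / (A / B) by field; rewrite !gt_eqF.
rewrite ln_div ?posrE ?divr_gt0 //; lra.
Qed.

Lemma logsum a1 a2 b1 b2 : 0 <= a1 -> 0 <= a2 -> 0 < b1 -> 0 < b2 ->
  kterm (a1 + a2) (b1 + b2) <= kterm a1 b1 + kterm a2 b2.
Proof.
move=> a10 a20 b10 b20.
case: (eqVneq (a1 + a2) 0) => [E|An0].
  have -> : a1 = 0 by lra.
  have -> : a2 = 0 by lra.
  by rewrite addr0 !kterm0 addr0.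
have Ap : 0 < a1 + a2 by rewrite lt_def An0 addr_ge0.
have Bp : 0 < b1 + b2 by rewrite addr_gt0.
have h1 := kt_aux a10 b10 Ap Bp.
have h2 := kt_aux a20 b20 Ap Bp.
have E : (b1 + b2) * ((a1 + a2) / (b1 + b2)) = a1 + a2 by field; rewrite gt_eqF.
rewrite /kterm in h1 h2 *.
have : kterm (a1 + a2) (b1 + b2) = a1 * ln ((a1 + a2) / (b1 + b2)) + a1 - b1 * ((a1 + a2) / (b1 + b2))
   + (a2 * ln ((a1 + a2) / (b1 + b2)) + a2 - b2 * ((a1 + a2) / (b1 + b2))).
  rewrite /kterm; set Q := (a1 + a2) / (b1 + b2).
  have -> : b1 * Q = (b1 + b2) * Q - b2 * Q by ring.
  rewrite E; ring.
rewrite /kterm => ->; lra.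
Qed.

Lemma kterm_scale t u v : 0 < t -> 0 < v -> kterm (t * u) (t * v) = t * kterm u v.
Proof.
move=> t0 v0; rewrite /kterm.
have -> : t * u / (t * v) = u / v by field; rewrite !gt_eqF.
by rewrite mulrA.
Qed.

Lemma klB_kt a b : klB a b = kterm a b + kterm (1 - a) (1 - b).
Proof. by []. Qed.

Lemma klB_ge0 a b : 0 <= a <= 1 -> 0 < b < 1 -> 0 <= klB a b.
Proof.
move=> /andP[a0 a1] /andP[b0 b1]; rewrite klB_kt.
have h1 := kterm_ge a0 b0.
have h2 : (1 - a) - (1 - b) <= kterm (1 - a) (1 - b) by apply: kterm_ge; lra.
lra.
Qed.

Lemma klB_gt0 a b : 0 <= a <= 1 -> 0 < b < 1 -> a != b -> 0 < klB a b.
Proof.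
move=> /andP[a0 a1] /andP[b0 b1] ab; rewrite klB_kt.
case: (eqVneq a 0) => [a00|an0].
  have h1 := kterm_ge a0 b0.
  have h2 : (1 - a) - (1 - b) < kterm (1 - a) (1 - b).
    apply: kterm_gt; [lra|lra|]; apply/eqP => E.
    have b00 : b = 0 by lra.
    lra.
  lra.
have ap : 0 < a by rewrite lt_def an0.
have h1 := kterm_gt ap b0 ab.
have h2 : (1 - a) - (1 - b) <= kterm (1 - a) (1 - b) by apply: kterm_ge; lra.
lra.
Qed.

Lemma klB_same a : klB a a = 0.
Proof.
rewrite /klB; case: (eqVneq a 0) => [->|an0]; first by rewrite !mul0r subr0 divff ?oner_eq0 // ln1 mulr0 addr0.
case: (eqVneq (1 - a) 0) => [->|an1]; first by rewrite divff // ln1 mulr0 mul0r addr0.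
by rewrite !divff // ln1 !mulr0 addr0.
Qed.

Lemma klB_sym a b : klB (1 - a) (1 - b) = klB a b.
Proof.
rewrite /klB; have -> : 1 - (1 - a) = a by ring.
have -> : 1 - (1 - b) = b by ring.
by rewrite addrC.
Qed.

Lemma klB_convex t a1 a2 b1 b2 : 0 <= t <= 1 -> 0 <= a1 <= 1 -> 0 <= a2 <= 1 ->
  0 < b1 < 1 -> 0 < b2 < 1 ->
  klB (t * a1 + (1 - t) * a2) (t * b1 + (1 - t) * b2) <= t * klB a1 b1 + (1 - t) * klB a2 b2.
Proof.
move=> /andP[t0 t1] /andP[a10 a11] /andP[a20 a21] /andP[b10 b11] /andP[b20 b21].
case: (eqVneq t 0) => [->|tn0].
  by rewrite !mul0r !add0r subr0 !mul1r.
case: (eqVneq t 1) => [->|tn1].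
  by rewrite subrr !mul0r !addr0 !mul1r.
have tp : 0 < t by rewrite lt_def tn0.
have tq : 0 < 1 - t by rewrite subr_gt0 lt_def eq_sym tn1.
rewrite !klB_kt.
have -> : 1 - (t * a1 + (1 - t) * a2) = t * (1 - a1) + (1 - t) * (1 - a2) by ring.
have -> : 1 - (t * b1 + (1 - t) * b2) = t * (1 - b1) + (1 - t) * (1 - b2) by ring.
have h1 := logsum (mulr_ge0 (ltW tp) a10) (mulr_ge0 (ltW tq) a20) (mulr_gt0 tp b10) (mulr_gt0 tq b20).
have h2 : kterm (t * (1 - a1) + (1 - t) * (1 - a2)) (t * (1 - b1) + (1 - t) * (1 - b2))
   <= kterm (t * (1 - a1)) (t * (1 - b1)) + kterm ((1 - t) * (1 - a2)) ((1 - t) * (1 - b2)).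
  apply: logsum; apply: mulr_ge0 || apply: mulr_gt0; lra.
rewrite !kterm_scale // in h1 h2; try lra.
Qed.

Definition mixpR := @mixp R.

Lemma mixp_aff a t l1 l2 : mixp a (t * l1 + (1 - t) * l2) = t * mixp a l1 + (1 - t) * mixp a l2.
Proof. rewrite /mixp; ring. Qed.

Lemma mixp_range a l : 0 < a < 1 -> 0 <= l <= 1 -> 0 < mixp a l < 1.
Proof.
move=> /andP[a0 a1] /andP[l0 l1]; rewrite /mixp.
have h1 : 0 <= l * (1 - a) by apply: mulr_ge0; lra.
have h2 : 0 <= (1 - l) * a by apply: mulr_ge0; lra.
have h3 : l * (1 - a) + (1 - l) * a = a + l * (1 - 2 * a) by ring.
apply/andP; split; nra.
Qed.

Lemma mixp_01 a l : 0 < a < 1 -> 0 <= l <= 1 -> 0 <= mixp a l <= 1.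
Proof. by move=> ha hl; have /andP[h1 h2] := mixp_range ha hl; rewrite !ltW. Qed.

Lemma mono2 a t l1 l2 : 0 < a < 1 -> 0 <= t <= 1 -> 0 <= l1 <= 1 -> 0 <= l2 <= 1 ->
  klB (mixp a l1) (mixp a (t * l1 + (1 - t) * l2)) <= klB (mixp a l1) (mixp a l2).
Proof.
move=> ha ht h1 h2; rewrite mixp_aff.
have E : mixp a l1 = t * mixp a l1 + (1 - t) * mixp a l1 by ring.
rewrite {1}E.
have := klB_convex ht (mixp_01 ha h1) (mixp_01 ha h1) (mixp_range ha h1) (mixp_range ha h2).
rewrite klB_same mulr0 add0r => H; apply: (le_trans H).
have := klB_ge0 (mixp_01 ha h1) (mixp_range ha h2).
move: ht => /andP[t0 t1] k0.
have : 0 <= t * klB (mixp a l1) (mixp a l2) by apply: mulr_ge0.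
lra.
Qed.

Lemma mono1 a t l1 l2 : 0 < a < 1 -> 0 <= t <= 1 -> 0 <= l1 <= 1 -> 0 <= l2 <= 1 ->
  klB (mixp a (t * l1 + (1 - t) * l2)) (mixp a l2) <= klB (mixp a l1) (mixp a l2).
Proof.
move=> ha ht h1 h2; rewrite mixp_aff.
have E : mixp a l2 = t * mixp a l2 + (1 - t) * mixp a l2 by ring.
rewrite [X in klB _ X]E.
have := klB_convex ht (mixp_01 ha h1) (mixp_01 ha h2) (mixp_range ha h2) (mixp_range ha h2).
rewrite klB_same mulr0 addr0 => H; apply: (le_trans H).
have := klB_ge0 (mixp_01 ha h1) (mixp_range ha h2).
move: ht => /andP[t0 t1] k0.
have : 0 <= (1 - t) * klB (mixp a l1) (mixp a l2) by apply: mulr_ge0; lra.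
lra.
Qed.

Lemma dproc a A l1 l2 : 0 < a -> a <= A -> A < 2^-1 -> 0 <= l1 <= 1 -> 0 <= l2 <= 1 ->
  klB (mixp A l1) (mixp A l2) <= klB (mixp a l1) (mixp a l2).
Proof.
move=> a0 aA A2 h1 h2.
have ha : 0 < a < 1 by apply/andP; split; lra.
set c := (A - a) / (1 - 2 * a).
have a2 : 0 < 1 - 2 * a by lra.
have c0 : 0 <= c by apply: divr_ge0; lra.
have c1 : c <= 1.
  rewrite /c ler_pdivrMr //; lra.
have E l : mixp A l = (1 - c) * mixp a l + (1 - (1 - c)) * (1 - mixp a l).
  rewrite /c /mixp; field; lra.
rewrite !E.
have hc : 0 <= 1 - c <= 1 by apply/andP; split; lra.
have m1 := mixp_01 ha h1.
have m2 := mixp_range ha h2.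
have m1' : 0 <= 1 - mixp a l1 <= 1 by move: m1 => /andP[? ?]; apply/andP; split; lra.
have m2' : 0 < 1 - mixp a l2 < 1 by move: m2 => /andP[? ?]; apply/andP; split; lra.
have := klB_convex hc m1 m1' m2 m2'.
rewrite klB_sym => H; apply: (le_trans H); lra.
Qed.


Lemma B2 a A t : 0 < a -> a <= A -> A < 2^-1 -> 0 <= t <= 3/4 ->
  klB (1 - A) (mixp A (3/4)) <= klB (mixp a 1) (mixp a t).
Proof.
move=> a0 aA A2 /andP[t0 t1].
have ha : 0 < a < 1 by apply/andP; split; lra.
have -> : 1 - A = mixp A 1 by rewrite /mixp; ring.
have h01 : 0 <= (1:R) <= 1 by apply/andP; split; lra.
have h34 : 0 <= (3/4:R) <= 1 by apply/andP; split; lra.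
apply: (le_trans (dproc a0 aA A2 h01 h34)).
set th := (3/4 - t) / (1 - t).
have E : th * 1 + (1 - th) * t = 3/4 by rewrite /th; field; lra.
have ht : 0 <= th <= 1.
  apply/andP; split; first by apply: divr_ge0; lra.
  rewrite /th ler_pdivrMr; lra.
rewrite -{1}E; apply: mono2 => //; apply/andP; split; lra.
Qed.

Lemma B3 a A t : 0 < a -> a <= A -> A < 2^-1 -> 4^-1 <= t <= 1 ->
  klB (1 - A) (mixp A (3/4)) <= klB (mixp a 0) (mixp a t).
Proof.
move=> a0 aA A2 /andP[t0 t1].
have -> : mixp a 0 = 1 - mixp a 1 by rewrite /mixp; ring.
have -> : mixp a t = 1 - mixp a (1 - t) by rewrite /mixp; ring.
rewrite klB_sym; apply: B2 => //; apply/andP; split; lra.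
Qed.

Lemma B4 a A s : 0 < a -> a <= A -> A < 2^-1 -> 4^-1 <= s <= 1 ->
  klB (mixp A 4^-1) A <= klB (mixp a s) (mixp a 0).
Proof.
move=> a0 aA A2 /andP[s0 s1].
have ha : 0 < a < 1 by apply/andP; split; lra.
have h0 : 0 <= (0:R) <= 1 by apply/andP; split; lra.
have h4 : 0 <= (4^-1:R) <= 1 by apply/andP; split; lra.
have H1 := dproc a0 aA A2 h4 h0.
have E0 : mixp A 0 = A by rewrite /mixp; ring.
rewrite E0 in H1; apply: (le_trans H1).
set th := 4^-1 / s.
have E : th * s + (1 - th) * 0 = 4^-1 by rewrite /th; field; lra.
have ht : 0 <= th <= 1.
  apply/andP; split; first by apply: divr_ge0; lra.
  rewrite /th ler_pdivrMr; lra.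
rewrite -{1}E; apply: mono1 => //; apply/andP; split; lra.
Qed.

End KL.

Section KdS.
Variable R : realType.
Variable p : R -> R.
Hypothesis hA : 0 < p 2^-1 < 2^-1.
Local Notation A := (p 2^-1).
Local Notation c := (klB (1 - A) (mixp A (3/4))).

Lemma c_pos : 0 < c.
Proof.
move: hA => /andP[A0 A2].
apply: klB_gt0; first (apply/andP; split; lra).
  by apply: mixp_range; apply/andP; split; lra.
apply/eqP; rewrite /mixp => E; lra.
Qed.

Lemma T_pos : 0 < klB (mixp A 4^-1) A.
Proof.
move: hA => /andP[A0 A2].
apply: klB_gt0; last by apply/eqP; rewrite /mixp => E; lra.
  by apply: mixp_01; apply/andP; split; lra.
by apply/andP; split; lra.
Qed.

Lemma S2_lb : has_lbound [set x | exists2 rho, 4^-1 <= rho <= 2^-1 & x = fK p rho].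
Proof.
exists 0 => y [rho /andP[r0 r1] ->]; rewrite /fK; apply: mulr_ge0; first lra.
exact: ltW c_pos.
Qed.

Lemma Kd_le_f : Kd p <= 4^-1 * c.
Proof.
rewrite /Kd ge_min; apply/orP; right; rewrite ge_min; apply/orP; left.
apply: (ge_inf S2_lb); exists 4^-1; [apply/andP; split; lra | by []].
Qed.

Lemma Kd_le_T : Kd p <= 4^-1 * klB (mixp A 4^-1) A.
Proof. by rewrite /Kd ge_min; apply/orP; right; rewrite ge_min; apply/orP; right. Qed.

Lemma Kd_pos : 0 < Kd p.
Proof.
move: hA => /andP[A0 A2].
have hc := c_pos.
have ha : 0 < A < 1 by apply/andP; split; lra.
rewrite /Kd !lt_min; apply/andP; split; [|apply/andP; split]; last first.
  by apply: mulr_gt0; [lra | exact: T_pos].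
- apply: (@lt_le_trans _ _ (4^-1 * c)); first by apply: mulr_gt0; lra.
  apply: lb_le_inf.
    by exists (fK p 4^-1); exists 4^-1; [apply/andP; split; lra | by []].
  move=> y [rho /andP[r0 r1] ->]; rewrite /fK; nra.
- set g0 := klB (mixp A (4/5)) (mixp A (11/20)).
  have g0p : 0 < g0.
    apply: klB_gt0; first by apply: mixp_01 => //; apply/andP; split; lra.
      by apply: mixp_range => //; apply/andP; split; lra.
    apply/eqP; rewrite /mixp => E; nra.
  set m := Num.min (c / 20) (9/20 * g0).
  have mp : 0 < m by rewrite lt_min; apply/andP; split; [apply: divr_gt0 | apply: mulr_gt0]; lra.
  apply: (lt_le_trans mp); apply: lb_le_inf.
    exists (Num.max (fK p 0) (gK p 0)); exists 0.
      by apply/andP; split; lra.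
    by [].
  move=> y [rho /andP[r0 r1] ->].
  case: (lerP (1/20) rho) => hr.
    rewrite le_max; apply/orP; left; rewrite ge_min; apply/orP; left.
    rewrite /fK; nra.
  rewrite le_max; apply/orP; right; rewrite ge_min; apply/orP; right.
  rewrite /gK.
  have H1 : g0 <= klB (mixp A (1 - 4 * rho)) (mixp A (11/20)).
    set th := (4/5 - 11/20) / (1 - 4 * rho - 11/20).
    have E : th * (1 - 4 * rho) + (1 - th) * (11/20) = 4/5 by rewrite /th; field; lra.
    rewrite /g0 -E; apply: mono1 => //; try (apply/andP; split; lra).
    apply/andP; split; first by apply: divr_ge0; lra.
    rewrite /th ler_pdivrMr; lra.
  have H2 : klB (mixp A (1 - 4 * rho)) (mixp A (11/20)) <= klB (mixp A (1 - 4 * rho)) (mixp A (2^-1 + rho)).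
    set th := (1/20 - rho) / (1 - 4 * rho - (2^-1 + rho)).
    have E : th * (1 - 4 * rho) + (1 - th) * (2^-1 + rho) = 11/20 by rewrite /th; field; lra.
    rewrite -E; apply: mono2 => //; try (apply/andP; split; lra).
    apply/andP; split; first by apply: divr_ge0; lra.
    rewrite /th ler_pdivrMr; lra.
  have : 0 <= g0 by lra.
  nra.
Qed.

End KdS.

Section BinDrift.
Variable R : realType.

Lemma bin_drift (a b u x : R) : 0 < a < 1 -> 0 < b < 1 -> 0 <= u <= b -> u <= x -> x - u <= 1 - b ->
  let Wt := (1 - a) * u + a * (b - u) in let Pt := (1 - a) * x + a * (1 - x) in
  let Wf := a * u + (1 - a) * (b - u) in let Pf := a * x + (1 - a) * (1 - x) in
  Pt * (Wt / Pt * ln ((Wt / Pt) / (1 - Wt / Pt))) + Pf * (Wf / Pf * ln ((Wf / Pf) / (1 - Wf / Pf)))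
    - b * ln (b / (1 - b))
  = b * klB (mixp a (u / b)) (mixp a ((x - u) / (1 - b))).
Proof.
move=> ha /andP[b0 b1] /andP[u0 ub] ux xu Wt Pt Wf Pf.
have ha' := ha; move: ha' => /andP[a0 a1].
have s01 : 0 <= u / b <= 1.
  apply/andP; split; first by apply: divr_ge0; lra.
  by rewrite ler_pdivrMr //; lra.
have t01 : 0 <= (x - u) / (1 - b) <= 1.
  apply/andP; split; first by apply: divr_ge0; lra.
  by rewrite ler_pdivrMr; lra.
set al := mixp a (u / b).
set be := mixp a ((x - u) / (1 - b)).
have /andP[al0 al1] : 0 < al < 1 by apply: mixp_range.
have /andP[be0 be1] : 0 < be < 1 by apply: mixp_range.
have hWt : Wt = b * al by rewrite /Wt /al /mixp; field; lra.
have hPt : Pt = b * al + (1 - b) * be by rewrite /Pt /al /be /mixp; field; apply/andP; split; lra.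
have hWf : Wf = b * (1 - al) by rewrite /Wf /al /mixp; field; lra.
have hPf : Pf = b * (1 - al) + (1 - b) * (1 - be) by rewrite /Pf /al /be /mixp; field; apply/andP; split; lra.
have Q1 : 0 < b * al by apply: mulr_gt0.
have Q2 : 0 < (1 - b) * be by apply: mulr_gt0; lra.
have Q3 : 0 < b * (1 - al) by apply: mulr_gt0; lra.
have Q4 : 0 < (1 - b) * (1 - be) by apply: mulr_gt0; lra.
have E1 : Pt * (Wt / Pt * ln (Wt / Pt / (1 - Wt / Pt))) = b * al * (ln (b / (1 - b)) + ln (al / be)).
  rewrite hWt hPt.
  have -> : b * al / (b * al + (1 - b) * be) / (1 - b * al / (b * al + (1 - b) * be))
      = (b / (1 - b)) * (al / be) by field; rewrite !gt_eqF //; lra.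
  rewrite lnM ?posrE; [|apply: divr_gt0; lra|apply: divr_gt0; lra].
  by field; rewrite gt_eqF //; lra.
have E2 : Pf * (Wf / Pf * ln (Wf / Pf / (1 - Wf / Pf))) = b * (1 - al) * (ln (b / (1 - b)) + ln ((1 - al) / (1 - be))).
  rewrite hWf hPf.
  have -> : b * (1 - al) / (b * (1 - al) + (1 - b) * (1 - be)) / (1 - b * (1 - al) / (b * (1 - al) + (1 - b) * (1 - be)))
      = (b / (1 - b)) * ((1 - al) / (1 - be)) by field; rewrite !gt_eqF //; lra.
  rewrite lnM ?posrE; [|apply: divr_gt0; lra|apply: divr_gt0; lra].
  by field; rewrite gt_eqF //; lra.
rewrite E1 E2 /klB; ring.
Qed.

End BinDrift.

From mathcomp Require Import zify.

Lemma exists_argmax (R : realType) (f : nat -> R) n : (0 < n)%N ->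
  exists2 m, (m < n)%N & forall m', (m' < n)%N -> f m' <= f m.
Proof.
elim: n => [//|n IH] _.
case: n IH => [|n] IH.
  by exists 0%N => // m'; rewrite ltnS leqn0 => /eqP ->.
have [m hm Hm] := IH isT.
case: (lerP (f n.+1) (f m)) => H.
  exists m; first lia.
  move=> m'; rewrite ltnS leq_eqVlt => /orP[/eqP ->|]; first exact: H.
  exact: Hm.
exists n.+1 => // m'; rewrite ltnS leq_eqVlt => /orP[/eqP -> //|/Hm H2].
exact: (le_trans H2 (ltW H)).
Qed.

Lemma find_iota (P : pred nat) s n m : (m < n)%N -> P (s + m)%N ->
  (find P (iota s n) < n)%N /\ P (s + find P (iota s n))%N.
Proof.
move=> mn Pm.
have hh : has P (iota s n) by apply/hasP; exists (s + m)%N => //; rewrite mem_iota; lia.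
split; first by move: hh; rewrite has_find size_iota.
have := nth_find 0%N hh; rewrite nth_iota //.
by move: hh; rewrite has_find size_iota.
Qed.

Lemma sum_ge_term (R : realType) (F : nat -> R) m n i : (m <= i < n)%N ->
  (forall j, (m <= j < n)%N -> 0 <= F j) -> F i <= \sum_(m <= j < n) F j.
Proof.
move=> hi H.
rewrite (bigD1_seq i) ?mem_index_iota ?iota_uniq //= lerDl.
rewrite big_seq_cond; apply: sumr_ge0 => j /andP[]; rewrite mem_index_iota => hj _.
exact: H.
Qed.

Section Struct.
Variable R : realType.
Variable L : nat.
Variable pi : nat -> R.
Hypothesis hL : (0 < L)%N.
Hypothesis hpos : forall i, (i < NN L)%N -> 0 < pi i.
Hypothesis hsum : mass pi 0 (NN L) = 1.
Local Notation N := (NN L).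

Lemma mass_split a b c : (a <= b <= c)%N -> mass pi a c = mass pi a b + mass pi b c.
Proof. by move=> /andP[ab bc]; rewrite /mass (big_cat_nat ab bc). Qed.

Lemma mass_ge0 a b : (b <= N)%N -> 0 <= mass pi a b.
Proof.
move=> bN; rewrite /mass big_nat_cond; apply: sumr_ge0 => i /andP[/andP[_ hi] _].
by apply: ltW; apply: hpos; lia.
Qed.

Lemma mass_gt0 a b : (a < b <= N)%N -> 0 < mass pi a b.
Proof.
move=> /andP[ab bN]; rewrite /mass big_ltn //.
apply: ltr_wpDr; first exact: mass_ge0.
apply: hpos; lia.
Qed.

Lemma mass1 i : mass pi i i.+1 = pi i.
Proof. by rewrite /mass big_nat1. Qed.

Lemma mass0 a : mass pi a a = 0.
Proof. by rewrite /mass big_geq. Qed.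

Lemma mass_le a b c : (a <= b <= c)%N -> (c <= N)%N -> mass pi a b <= mass pi a c.
Proof.
move=> h cN; rewrite (mass_split h) lerDl; exact: mass_ge0.
Qed.

Lemma mass_lt a b c : (a <= b)%N -> (b < c)%N -> (c <= N)%N -> mass pi a b < mass pi a c.
Proof.
move=> ab bc cN; rewrite (@mass_split a b c) ?ab ?(ltnW bc) // ltrDl.
apply: mass_gt0; lia.
Qed.

Lemma NN_gt0 : (0 < N)%N.
Proof. by rewrite /NN expn_gt0. Qed.

Lemma massH_L m : massH L pi L m = pi m.
Proof. by rewrite /massH subnn expn0 !muln1 mass1. Qed.

Lemma NN_split l : (l <= L)%N -> N = (2 ^ l * 2 ^ (L - l))%N.
Proof. by move=> lL; rewrite /NN -expnD subnKC. Qed.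

Definition Pl (l : 'I_L.+1) := [exists m : 'I_(2 ^ l), 2^-1 <= massH L pi l m].

Lemma P0 : Pl ord0.
Proof.
apply/existsP; exists (Ordinal (expn_gt0 2 0)); rewrite /massH /= mul0n subn0 mul1n.
rewrite hsum; lra.
Qed.

Lemma lstar_max l m : (l <= L)%N -> (m < 2 ^ l)%N -> 2^-1 <= massH L pi l m ->
  (l <= lstar L pi)%N.
Proof.
move=> lL ml H.
have Hl : (l < L.+1)%N by lia.
have := @leq_bigmax_cond _ Pl (fun i => nat_of_ord i) (Ordinal Hl).
apply; apply/existsP; by exists (Ordinal ml).
Qed.

Lemma lstar_spec : (lstar L pi <= L)%N /\
  exists2 m, (m < 2 ^ lstar L pi)%N & 2^-1 <= massH L pi (lstar L pi) m.
Proof.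
rewrite /lstar -/(Pl _).
have -> : \max_(l < L.+1 | Pl l) (l : nat) = \max_(l | Pl l) (l : nat) by [].
rewrite (@bigop.bigmax_eq_arg _ ord0 Pl _ P0); case: (arg_maxnP _ P0) => //= i /existsP[m Hm] _.
split; first by have := ltn_ord i; lia.
by exists m.
Qed.


Local Notation ls := (lstar L pi).
Local Notation ms := (mstar L pi).
Local Notation d := (dstart L pi).
Local Notation k := (kstar L pi).
Local Notation e := (2 ^ (L - lstar L pi))%N.

Lemma ls_le : (ls <= L)%N.
Proof. by case: lstar_spec. Qed.

Lemma ls_ge1 : (1 <= ls)%N.
Proof.
have hN : N = (2 * 2 ^ (L - 1))%N by rewrite (NN_split hL).
have h1 : massH L pi 1 0 + massH L pi 1 1 = 1.
  rewrite /massH mul0n mul1n -hsum hN -(@mass_split 0) //.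
  apply/andP; split; lia.
case: (lerP 2^-1 (massH L pi 1 0)) => H.
  by apply: (@lstar_max 1 0).
by apply: (@lstar_max 1 1) => //; lra.
Qed.

Lemma mstar_spec : [/\ (ms < 2 ^ ls)%N,
  (forall m', (m' < 2 ^ ls)%N -> massH L pi ls m' <= massH L pi ls ms) &
  2^-1 <= massH L pi ls ms].
Proof.
have [m0 hm0 Hm0] := @exists_argmax R (fun m => massH L pi ls m) (2 ^ ls) (expn_gt0 _ _).
have := @find_iota (fun m => [forall m' : 'I_(2 ^ ls), massH L pi ls m' <= massH L pi ls m]) 0 _ _ hm0.
case.
  by apply/forallP => m'; apply: Hm0; exact: ltn_ord.
rewrite /mstar /= => h1 /forallP h2.
have h3 : forall m', (m' < 2 ^ ls)%N -> massH L pi ls m' <= massH L pi ls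
    (find (fun m => [forall m'0 : 'I_(2 ^ ls), massH L pi ls m'0 <= massH L pi ls m]) (iota 0 (2 ^ ls))).
  by move=> m' hm'; exact: (h2 (Ordinal hm')).
split => //.
case: lstar_spec => _ [m hm Hm].
by apply: (le_trans Hm); apply: h3.
Qed.

Lemma d_def : d = (ms * e)%N.
Proof. by []. Qed.

Lemma de_le : (d + e <= N)%N.
Proof.
case: mstar_spec => h1 _ _.
rewrite d_def (NN_split ls_le).
have : (ms.+1 * e <= 2 ^ ls * e)%N by rewrite leq_mul2r h1 orbT.
by rewrite mulSn addnC.
Qed.

Lemma e_ge1 : (1 <= e)%N.
Proof. by rewrite expn_gt0. Qed.

Lemma massHstar : 2^-1 <= mass pi d (d + e).
Proof.
case: mstar_spec => _ _ H; move: H; rewrite /massH d_def.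
by rewrite mulSn addnC.
Qed.

Definition cc (j : nat) : R := `|mass pi d j.+1 - 2^-1|.

Lemma kstar_spec : [/\ (d <= k)%N, (k < N)%N &
  forall k', (d <= k')%N -> (k' < N)%N -> cc k <= cc k'].
Proof.
have dN : (d < N)%N by have := de_le; have := e_ge1; lia.
have [j0 hj0 Hj0] := @exists_argmax R (fun j => - cc (d + j)) (N - d) ltac:(lia).
have := @find_iota (fun k0 => [forall k' : 'I_N, (d <= k')%N ==> (cc k0 <= cc k')]) d _ _ hj0.
case.
  apply/forallP => k'; apply/implyP => dk.
  have := Hj0 (k' - d)%N ltac:(have := ltn_ord k'; lia).
  by rewrite subnKC // lerN2.
rewrite /kstar -/(cc _) => h1 /forallP h2.
have E : (fun k0 => [forall k'0 : 'I_N, (d <= k'0)%N ==> (`|mass pi d k0.+1 - 2^-1| <= `|mass pi d k'0.+1 - 2^-1|)])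
   = (fun k0 => [forall k' : 'I_N, (d <= k')%N ==> (cc k0 <= cc k')]) by [].
rewrite /= E.
split; [lia | lia |].
move=> k' dk kN; have := h2 (Ordinal kN); by move/implyP; apply.
Qed.


Lemma items_small : (ls < L)%N -> forall i, (i < N)%N -> pi i < 2^-1.
Proof.
move=> lsL i iN; rewrite ltNge; apply/negP => H.
have := @lstar_max L i (leqnn L) iN; rewrite massH_L => /(_ H); lia.
Qed.

Lemma mass_le1 a b : (a <= b <= N)%N -> mass pi a b <= 1.
Proof.
move=> /andP[ab bN].
rewrite -hsum (@mass_split 0 a N) ?(@mass_split a b N) ?ab ?bN ?andbT //; last lia.
have := @mass_ge0 0 a ltac:(lia); have := @mass_ge0 b N (leqnn _); lra.
Qed.

Lemma k_lt_de : (k < d + e)%N.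
Proof.
case: kstar_spec => dk kN Hk.
rewrite ltnNge; apply/negP => H.
have e1 := e_ge1.
have := Hk (d + e - 1)%N ltac:(lia) ltac:(have := de_le; lia).
rewrite /cc.
have -> : (d + e - 1).+1 = (d + e)%N by lia.
have h1 := massHstar.
have h2 : mass pi d (d + e) < mass pi d k.+1 by apply: mass_lt; lia.
rewrite !ger0_norm; lra.
Qed.

Lemma ls_L_k : ls = L -> k = d.
Proof.
move=> E; have := k_lt_de; case: kstar_spec => dk _ _.
rewrite E subnn expn0; lia.
Qed.

Local Notation X := (mass pi d k.+1).

Lemma X_le1 : X <= 1.
Proof. case: kstar_spec => dk kN _; apply: mass_le1; lia. Qed.

Lemma X_ge : 4^-1 <= X.
Proof.
case: kstar_spec => dk kN Hk.
case: (ltnP ls L) => lsL; last first.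
  have E : ls = L by have := ls_le; lia.
  have h1 := massHstar; move: h1; rewrite E subnn expn0 -(ls_L_k E) addn1 => h1; lra.
rewrite leNgt; apply/negP => H.
have k1 : (k.+1 < d + e)%N.
  rewrite ltnNge; apply/negP => H2.
  have := @mass_le d (d + e) k.+1 ltac:(lia) ltac:(lia).
  have := massHstar; lra.
have jN : (k.+1 < N)%N by have := de_le; lia.
have := Hk k.+1 ltac:(lia) jN.
have pj := items_small lsL jN.
have pj0 := hpos jN.
rewrite /cc (@mass_split d k.+1 k.+2) ?mass1; last lia.
have -> : `|X - 2^-1| = 2^-1 - X by rewrite ltr0_norm; [ring | lra].
move=> H3.
have : `|X + pi k.+1 - 2^-1| < 2^-1 - X by rewrite ltr_norml; apply/andP; split; lra.
lra.
Qed.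

Lemma X_le : (ls < L)%N -> X <= 3/4.
Proof.
move=> lsL.
case: kstar_spec => dk kN Hk.
rewrite leNgt; apply/negP => H.
have pk := items_small lsL kN.
have pk0 := hpos kN.
case: (eqVneq k d) => kd.
  by move: H; rewrite kd mass1 => H; move: pk; rewrite kd; lra.
have := Hk k.-1 ltac:(lia) ltac:(lia).
rewrite /cc.
have -> : k.-1.+1 = k by lia.
have E : mass pi d k.+1 = mass pi d k + pi k by rewrite (@mass_split d k k.+1) ?mass1 //; lia.
rewrite E in H *.
have -> : `|mass pi d k + pi k - 2^-1| = mass pi d k + pi k - 2^-1 by rewrite ger0_norm; lra.
move=> H3.
have : `|mass pi d k - 2^-1| < mass pi d k + pi k - 2^-1 by rewrite ltr_norml; apply/andP; split; lra.
lra.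
Qed.

Lemma sizeS_bounds : (1 <= sizeS L pi)%N /\ (2 * sizeS L pi <= N)%N.
Proof.
case: kstar_spec => dk kN _.
have := k_lt_de; rewrite /sizeS => H.
split; first lia.
have h1 : (2 * e <= N)%N.
  rewrite (NN_split ls_le).
  have : (2 <= 2 ^ ls)%N by rewrite -{1}(expn1 2) leq_exp2l //; exact: ls_ge1.
  move=> h; rewrite leq_mul2r h orbT //.
lia.
Qed.

Lemma dsize_range : 0 < delta R L * (sizeS L pi)%:R <= 2^-1.
Proof.
case: sizeS_bounds => h1 h2.
have Np : (0 : R) < N%:R by rewrite ltr0n NN_gt0.
rewrite /delta; apply/andP; split.
  by apply: mulr_gt0; [rewrite invr_gt0 | rewrite ltr0n].
rewrite mulrC ler_pdivrMr // -[X in _ <= X]mulr1.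
have : (2 * sizeS L pi)%:R <= N%:R :> R by rewrite ler_nat.
rewrite natrM => h; lra.
Qed.

Variable p : R -> R.
Hypothesis p_range : forall x : R, 0 < x < 1 -> 0 < p x < 2^-1.
Hypothesis p_mono : forall x y : R, 0 < x -> x <= y -> y < 1 -> p x <= p y.

Local Notation a := (p (delta R L * (sizeS L pi)%:R)).

Lemma a_range : 0 < a < 2^-1.
Proof. apply: p_range; have /andP[h1 h2] := dsize_range; apply/andP; split; lra. Qed.

Lemma a_le : a <= p 2^-1.
Proof. have /andP[h1 h2] := dsize_range; apply: p_mono => //; lra. Qed.

Definition insum lo hi := \sum_(lo <= i < hi | inS L pi i) pi i.
Definition W y lo hi := \sum_(lo <= i < hi) pi i * lik p L pi y i.

Lemma mass_ID lo hi : mass pi lo hi = insum lo hi + \sum_(lo <= i < hi | ~~ inS L pi i) pi i.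
Proof. by rewrite /mass (bigID (fun i => inS L pi i)). Qed.

Lemma W_true lo hi : W true lo hi = (1 - a) * insum lo hi + a * (mass pi lo hi - insum lo hi).
Proof.
have -> : mass pi lo hi - insum lo hi = \sum_(lo <= i < hi | ~~ inS L pi i) pi i by rewrite mass_ID; ring.
rewrite /W (bigID (fun i => inS L pi i)) /= /insum !mulr_sumr.
congr (_ + _); apply: eq_bigr => i Hi; rewrite /lik.
  by rewrite Hi eqxx mulrC.
by rewrite (negbTE Hi) /= mulrC.
Qed.

Lemma W_false lo hi : W false lo hi = a * insum lo hi + (1 - a) * (mass pi lo hi - insum lo hi).
Proof.
have -> : mass pi lo hi - insum lo hi = \sum_(lo <= i < hi | ~~ inS L pi i) pi i by rewrite mass_ID; ring.
rewrite /W (bigID (fun i => inS L pi i)) /= /insum !mulr_sumr.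
congr (_ + _); apply: eq_bigr => i Hi; rewrite /lik.
  by rewrite Hi /= mulrC.
by rewrite (negbTE Hi) /= mulrC.
Qed.

Lemma insum_ge0 lo hi : (hi <= N)%N -> 0 <= insum lo hi.
Proof.
move=> hN; rewrite /insum big_mkcond big_nat_cond /=; apply: sumr_ge0 => i /andP[/andP[_ hi'] _].
by case: ifP => // _; apply: ltW; apply: hpos; lia.
Qed.

Lemma outsum_ge0 lo hi : (hi <= N)%N -> 0 <= \sum_(lo <= i < hi | ~~ inS L pi i) pi i.
Proof.
move=> hN; rewrite big_mkcond big_nat_cond /=; apply: sumr_ge0 => i /andP[/andP[_ hi'] _].
by case: ifP => // _; apply: ltW; apply: hpos; lia.
Qed.

Lemma insum_le lo hi : (hi <= N)%N -> insum lo hi <= mass pi lo hi.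
Proof. by move=> hN; rewrite mass_ID lerDl outsum_ge0. Qed.

Lemma insum_split a0 b0 c0 : (a0 <= b0 <= c0)%N -> insum a0 c0 = insum a0 b0 + insum b0 c0.
Proof. by move=> /andP[ab bc]; rewrite /insum (big_cat_nat ab bc). Qed.

Lemma insum_all lo hi : (forall i, (lo <= i < hi)%N -> inS L pi i) -> insum lo hi = mass pi lo hi.
Proof.
move=> H; rewrite /insum /mass big_mkcond; apply: eq_big_nat => i hi'.
by rewrite H.
Qed.

Lemma insum_none lo hi : (forall i, (lo <= i < hi)%N -> ~~ inS L pi i) -> insum lo hi = 0.
Proof.
move=> H; rewrite /insum big_mkcond (eq_big_nat _ _ (F2 := fun _ => 0)) ?big1 //.
by move=> i hi'; rewrite (negbTE (H i hi')).
Qed.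

Local Notation xS := (insum 0 N).

Lemma xS_eq : xS = X.
Proof.
case: kstar_spec => dk kN _.
rewrite (@insum_split 0 d N) ?(@insum_split d k.+1 N); try (apply/andP; split; lia).
rewrite insum_none ?add0r; last by move=> i hi; rewrite /inS; lia.
rewrite (@insum_none k.+1) ?addr0; last by move=> i hi; rewrite /inS; lia.
by rewrite insum_all // => i hi; rewrite /inS; lia.
Qed.

Lemma insum_window lo hi : (lo <= d)%N -> (k < hi)%N -> (hi <= N)%N -> insum lo hi = X.
Proof.
move=> hlo hhi hN; case: kstar_spec => dk kN _.
rewrite (@insum_split lo d hi) ?(@insum_split d k.+1 hi); try (apply/andP; split; lia).
rewrite insum_none ?add0r; last by move=> i hi'; rewrite /inS; lia.
rewrite (@insum_none k.+1) ?addr0; last by move=> i hi'; rewrite /inS; lia.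
by rewrite insum_all // => i hi'; rewrite /inS; lia.
Qed.

Variable l : nat.
Hypothesis hl0 : (0 < l)%N.
Hypothesis hlL : (l < L)%N.
Local Notation B := (2 ^ (L - l))%N.

Lemma NlB : N = (2 ^ l * B)%N.
Proof. by apply: NN_split; lia. Qed.

Lemma B_lt_N : (B < N)%N.
Proof. rewrite /NN ltn_exp2l //; lia. Qed.

Lemma bin_facts q : (q < 2 ^ l)%N ->
  let b := massH L pi l q in let u := insum (q * B) (q.+1 * B) in
  [/\ 0 < b < 1, 0 <= u <= b, u <= xS, xS - u <= 1 - b & (q.+1 * B <= N)%N].
Proof.
move=> hq b u.
have hiN : (q.+1 * B <= N)%N by rewrite NlB leq_mul2r hq orbT.
have B1 : (1 <= B)%N by rewrite expn_gt0.
have hlohi : (q * B < q.+1 * B)%N by rewrite ltn_mul2r B1 ltnSn.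
have Ex : xS = insum 0 (q * B) + u + insum (q.+1 * B) N.
  by rewrite (@insum_split 0 (q * B) N) ?(@insum_split (q * B) (q.+1 * B) N) ?addrA //;
     apply/andP; split; lia.
have E1 : 1 = mass pi 0 (q * B) + b + mass pi (q.+1 * B) N.
  by rewrite -hsum /b /massH (@mass_split 0 (q * B) N) ?(@mass_split (q * B) (q.+1 * B) N) ?addrA //;
     apply/andP; split; lia.
have i1 := @insum_ge0 0 (q * B) ltac:(lia).
have i2 := @insum_ge0 (q.+1 * B) N (leqnn _).
have i3 := @insum_le 0 (q * B) ltac:(lia).
have i4 := @insum_le (q.+1 * B) N (leqnn _).
have u0 := @insum_ge0 (q * B) (q.+1 * B) hiN.
have ub := @insum_le (q * B) (q.+1 * B) hiN.
have b0 : 0 < b by apply: mass_gt0; apply/andP; split; lia.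
have m1 := @mass_ge0 0 (q * B) ltac:(lia).
have m2 := @mass_ge0 (q.+1 * B) N (leqnn _).
have out : 0 < mass pi 0 (q * B) + mass pi (q.+1 * B) N.
  case: q hq {b u Ex E1 i1 i2 i3 i4 u0 ub b0 m1 m2 hiN hlohi} => [|q] hq.
    have : 0 < mass pi (1 * B) N by apply: mass_gt0; have := B_lt_N; lia.
    rewrite mul0n; have := @mass_ge0 0 0 ltac:(lia); lra.
  have : 0 < mass pi 0 (q.+1 * B).
    apply: mass_gt0; apply/andP; split; first by rewrite muln_gt0.
    by rewrite NlB leq_mul2r; apply/orP; right; lia.
  have := @mass_ge0 (q.+2 * B) N (leqnn _); lra.
split => //.
- by apply/andP; split; lra.
- by apply/andP; split.
- rewrite Ex; lra.
- rewrite Ex; lra.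
Qed.

Definition Dq q := let b := massH L pi l q in let u := insum (q * B) (q.+1 * B) in
  b * klB (mixp a (u / b)) (mixp a ((xS - u) / (1 - b))).

Lemma massH_update y q : massH L (update p L pi y) l q = W y (q * B) (q.+1 * B) / predY p L pi y.
Proof. by rewrite /massH /mass /update /W -mulr_suml. Qed.

Lemma drift_eq : EnextU p L l pi - Unest L l pi = \sum_(0 <= q < 2 ^ l) Dq q.
Proof.
rewrite /EnextU big_bool /Unest !mulr_sumr -big_split -sumrB /=.
apply: eq_big_nat => q hq.
have [hb hu hux hxu _] := bin_facts (q := q) ltac:(lia).
have ha : 0 < a < 1 by have := a_range; move=> /andP[? ?]; apply/andP; split; lra.
have H := bin_drift ha hb hu hux hxu; cbv zeta in H.
rewrite /Dq /binmass !massH_update -H.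
have -> : predY p L pi true = W true 0 N by [].
have -> : predY p L pi false = W false 0 N by [].
by rewrite !W_true !W_false hsum.
Qed.

Lemma sum_bins n : \sum_(0 <= q < n) massH L pi l q = mass pi 0 (n * B).
Proof.
elim: n => [|n IH]; first by rewrite big_geq // mul0n mass0.
rewrite big_nat_recr //= IH /massH (@mass_split 0 (n * B) (n.+1 * B)) //.
by rewrite leq0n /= leq_mul2r leqnSn orbT.
Qed.

Lemma sum_massH : \sum_(0 <= q < 2 ^ l) massH L pi l q = 1.
Proof. by rewrite sum_bins -NlB hsum. Qed.

Lemma Dq_ge0 q : (q < 2 ^ l)%N -> 0 <= Dq q.
Proof.
move=> hq; have [/andP[b0 b1] /andP[u0 ub] hux hxu _] := bin_facts hq.
have ha : 0 < a < 1 by have := a_range; move=> /andP[? ?]; apply/andP; split; lra.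
rewrite /Dq /=; apply: mulr_ge0; first lra.
apply: klB_ge0; first apply: mixp_01 => //.
  by apply/andP; split; [apply: divr_ge0; lra | rewrite ler_pdivrMr //; lra].
apply: mixp_range => //.
by apply/andP; split; [apply: divr_ge0; lra | rewrite ler_pdivrMr; lra].
Qed.

Lemma caseA : (l <= ls)%N -> 4^-1 * klB (mixp (p 2^-1) 4^-1) (p 2^-1) <= \sum_(0 <= q < 2 ^ l) Dq q.
Proof.
move=> lls.
case: mstar_spec => hms _ _.
case: kstar_spec => dk kN _.
have hk := k_lt_de.
set f := (2 ^ (ls - l))%N.
have hB : B = (f * e)%N by rewrite /f -expnD; have := ls_le => h; congr expn; lia.
have f0 : (0 < f)%N by rewrite expn_gt0.
have e0 := e_ge1.
set Q := (ms %/ f)%N.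
have hms' : ms = (Q * f + ms %% f)%N by rewrite /Q -divn_eq.
have hr : (ms %% f < f)%N by rewrite ltn_pmod.
have hQ : (Q < 2 ^ l)%N.
  rewrite /Q ltn_divLR // /f -expnD.
  by have -> : (l + (ls - l) = ls)%N by lia.
have lo_le : (Q * B <= d)%N.
  rewrite d_def hB mulnA leq_mul2r; apply/orP; right; nia.
have hi_ge : (d + e <= Q.+1 * B)%N.
  have h1 : (ms.+1 <= Q.+1 * f)%N by nia.
  have : (ms.+1 * e <= Q.+1 * f * e)%N by rewrite leq_mul2r h1 orbT.
  by rewrite d_def hB mulnA mulSn addnC.
have [/andP[b0 b1] /andP[u0 ub] hux hxu hiN] := bin_facts hQ.
have uE : insum (Q * B) (Q.+1 * B) = xS.
  rewrite xS_eq; apply: insum_window => //; exact: leq_trans hk hi_ge.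
have bge : 2^-1 <= massH L pi l Q.
  have h1 := massHstar.
  have : mass pi d (d + e) <= massH L pi l Q.
    rewrite /massH (@mass_split (Q * B) d (Q.+1 * B)); last by rewrite lo_le (leq_trans (leq_addr e d) hi_ge).
    rewrite (@mass_split d (d + e) (Q.+1 * B)); last by rewrite leq_addr hi_ge.
    have := @mass_ge0 (Q * B) d (leq_trans (leq_addr e d) de_le).
    have := @mass_ge0 (d + e) (Q.+1 * B) hiN.
    lra.
  lra.
have hxS := X_ge; rewrite -xS_eq in hxS.
have hQ' : (0 <= Q < 2 ^ l)%N by rewrite hQ.
apply: (le_trans _ (@sum_ge_term _ Dq 0 (2 ^ l) Q hQ' (fun j hj => Dq_ge0 (andP hj).2))).
rewrite /Dq /=.
rewrite uE in u0 ub hux hxu *.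
rewrite subrr mul0r.
have hT : klB (mixp (p 2^-1) 4^-1) (p 2^-1) <= klB (mixp a (xS / massH L pi l Q)) (mixp a 0).
  have /andP[a0 a2] := a_range.
  have /andP[_ hA2] : 0 < p 2^-1 < 2^-1 by apply: p_range; apply/andP; split; lra.
  apply: B4 => //; first exact: a_le.
  apply/andP; split.
    rewrite ler_pdivlMr //; nra.
  by rewrite ler_pdivrMr //; lra.
have T0 : 0 <= klB (mixp (p 2^-1) 4^-1) (p 2^-1).
  have /andP[a0 a2] := a_range.
  have hA : 0 < p 2^-1 < 2^-1 by apply: p_range; apply/andP; split; lra.
  exact: (ltW (T_pos hA)).
nra.
Qed.

Lemma caseB : (ls < l)%N ->
  4^-1 * klB (1 - p 2^-1) (mixp (p 2^-1) (3/4)) <= \sum_(0 <= q < 2 ^ l) Dq q.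
Proof.
move=> lsl.
set c := klB (1 - p 2^-1) (mixp (p 2^-1) (3/4)).
have /andP[a0 a2] := a_range.
have hA : 0 < p 2^-1 < 2^-1 by apply: p_range; apply/andP; split; lra.
have /andP[_ hA2] := hA.
have c0 := c_pos hA; rewrite -/c in c0.
case: mstar_spec => hms _ _.
case: kstar_spec => dk kN _.
set g := (2 ^ (l - ls))%N.
have he : e = (g * B)%N by rewrite /g -expnD; have := ls_le => h; congr expn; lia.
have B0 : (0 < B)%N by rewrite expn_gt0.
set P := (k %/ B)%N.
have hk' : k = (P * B + k %% B)%N by rewrite /P -divn_eq.
have hr : (k %% B < B)%N by rewrite ltn_pmod.
have hP : (P < 2 ^ l)%N by rewrite /P ltn_divLR // -NlB.
have bP : massH L pi l P < 2^-1.
  rewrite ltNge; apply/negP => H.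
  by have := @lstar_max l P (ltnW hlL) hP H; rewrite leqNgt lsl.
have hxS := X_ge; rewrite -xS_eq in hxS.
have hxS2 := X_le (ltn_trans lsl hlL); rewrite -xS_eq in hxS2.
have key : forall q, (q < 2 ^ l)%N -> q != P -> massH L pi l q * c <= Dq q.
  move=> q hq qP.
  have [/andP[b0 b1] /andP[u0 ub] hux hxu hiN] := bin_facts hq.
  have hd : d = (ms * g * B)%N by rewrite d_def he mulnA.
  have Hall : (forall i, (q * B <= i < q.+1 * B)%N -> inS L pi i) \/
              (forall i, (q * B <= i < q.+1 * B)%N -> ~~ inS L pi i).
    have kPB : (k < P.+1 * B)%N by rewrite /P ltn_ceil.
    have PBk : (P * B <= k)%N by rewrite /P leq_trunc_div.
    case: (ltnP q P) => qP'.
      have h1 : (q.+1 * B <= P * B)%N by rewrite leq_mul2r qP' orbT.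
      case: (leqP (ms * g) q) => hq2.
        have h2 : (ms * g * B <= q * B)%N by rewrite leq_mul2r hq2 orbT.
        left => i /andP[hi1 hi2]; rewrite /inS; apply/andP; split.
          by rewrite hd; exact: leq_trans h2 hi1.
        exact: ltnW (leq_trans hi2 (leq_trans h1 PBk)).
      have h2 : (q.+1 * B <= ms * g * B)%N by rewrite leq_mul2r hq2 orbT.
      right => i /andP[hi1 hi2]; rewrite /inS; apply/negP => /andP[h3 _].
      have : (i < d)%N by rewrite hd; exact: leq_trans hi2 h2.
      by rewrite ltnNge h3.
    have qP2 : (P < q)%N by rewrite ltn_neqAle eq_sym qP qP'.
    have h1 : (P.+1 * B <= q * B)%N by rewrite leq_mul2r qP2 orbT.
    right => i /andP[hi1 hi2]; rewrite /inS; apply/negP => /andP[_ h3].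
    have : (k < i)%N by exact: leq_trans kPB (leq_trans h1 hi1).
    by rewrite ltnNge h3.
  rewrite /Dq /=.
  case: Hall => Hall.
    have Eu : insum (q * B) (q.+1 * B) = massH L pi l q := insum_all Hall.
    rewrite Eu in u0 ub hux hxu *.
    rewrite divff ?gt_eqF //.
    have : c <= klB (mixp a 1) (mixp a ((xS - massH L pi l q) / (1 - massH L pi l q))).
      apply: B2 => //; first exact: a_le.
      apply/andP; split; first by apply: divr_ge0; lra.
      rewrite ler_pdivrMr; [nra | lra].
    move=> H; apply: ler_wpM2l; lra.
  rewrite (insum_none Hall) in u0 ub hux hxu *.
  rewrite mul0r subr0.
  have : c <= klB (mixp a 0) (mixp a (xS / (1 - massH L pi l q))).
    apply: B3 => //; first exact: a_le.
    apply/andP; split; last by rewrite ler_pdivrMr; lra.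
    rewrite ler_pdivlMr; nra.
  move=> H; apply: ler_wpM2l; lra.
rewrite (bigD1_seq P) ?mem_index_iota ?iota_uniq ?hP //=.
have h0 := Dq_ge0 hP.
have hS := sum_massH; rewrite (bigD1_seq P) ?mem_index_iota ?iota_uniq ?hP //= in hS.
have hsum2 : (\sum_(0 <= q < 2 ^ l | q != P) massH L pi l q) * c <= \sum_(0 <= q < 2 ^ l | q != P) Dq q.
  rewrite mulr_suml big_seq_cond [X in _ <= X]big_seq_cond; apply: ler_sum => q /andP[].
  by rewrite mem_index_iota => /andP[_ hq] qP; apply: key.
have : (\sum_(0 <= q < 2 ^ l | q != P) massH L pi l q) = 1 - massH L pi l P by lra.
move=> E; rewrite E in hsum2.
nra.
Qed.

Lemma predY_pos y : 0 < predY p L pi y.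
Proof.
have /andP[a0 a2] := a_range.
have x0 := @insum_ge0 0 N (leqnn _).
have x1 := @insum_le 0 N (leqnn _); rewrite hsum in x1.
have -> : predY p L pi y = W y 0 N by [].
case: y; rewrite ?W_true ?W_false hsum; nra.
Qed.

Lemma good_update y : (forall i, (i < N)%N -> 0 < update p L pi y i) /\ mass (update p L pi y) 0 N = 1.
Proof.
have /andP[a0 a2] := a_range.
have P0 := predY_pos y.
split.
  move=> i hi; rewrite /update; apply: divr_gt0 => //; apply: mulr_gt0; first exact: hpos.
  rewrite /lik; case: ifP => _; lra.
rewrite /mass /update -mulr_suml.
have -> : \sum_(0 <= i < N) pi i * lik p L pi y i = predY p L pi y by [].
by rewrite divff // gt_eqF.
Qed.

Lemma final_bound : Kd p <= EnextU p L l pi - Unest L l pi.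
Proof.
have /andP[a0 a2] := a_range.
have hA : 0 < p 2^-1 < 2^-1 by apply: p_range; apply/andP; split; lra.
rewrite drift_eq.
case: (leqP l ls) => H.
  exact: le_trans (@Kd_le_T _ p) (caseA H).
exact: le_trans (Kd_le_f hA) (caseB H).
Qed.

End Struct.


Lemma good_fold (R : realType) (p : R -> R) (L : nat)
  (p_range : forall x : R, 0 < x < 1 -> 0 < p x < 2^-1) (hL : (0 < L)%N) :
  forall ys (pi : nat -> R), (forall i, (i < NN L)%N -> 0 < pi i) -> mass pi 0 (NN L) = 1 ->
  (forall i, (i < NN L)%N -> 0 < foldl (update p L) pi ys i) /\ mass (foldl (update p L) pi ys) 0 (NN L) = 1.
Proof.
elim=> [|y ys IH] pi hpos hsum //=.
have [h1 h2] := good_update hL hpos hsum p_range y.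
exact: IH.
Qed.

Lemma good_prior (R : realType) (L : nat) :
  (forall i, (i < NN L)%N -> 0 < prior R L i) /\ mass (prior R L) 0 (NN L) = 1.
Proof.
have N0 : (0 < NN L)%N by rewrite /NN expn_gt0.
split.
  by move=> i _; rewrite /prior /delta invr_gt0 ltr0n.
have h : (NN L)%:R != 0 :> R by rewrite pnatr_eq0 -lt0n.
by rewrite /mass /prior sumr_const_nat subn0 /delta -(mulr_natr (NN L)%:R^-1) mulVf.
Qed.

Unset Implicit Arguments.
Local Open Scope classical_set_scope.

Theorem lemma9 (R : realType) (p : R -> R)
  (p_range : forall x : R, 0 < x < 1 -> 0 < p x < 2^-1)
  (p_cont : forall x : R, 0 < x < 1 -> (p y @[y --> x] --> p x))
  (p_mono : forall x y : R, 0 < x -> x <= y -> y < 1 -> p x <= p y)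
  (L l : nat) (hl0 : (0 < l)%N) (hlL : (l < L)%N) :
  0 < Kd p /\
  forall ys : seq bool, (0 < size ys)%N ->
    EnextU p L l (posterior p L ys) - Unest L l (posterior p L ys) >= Kd p.
Proof.
have hA : 0 < p 2^-1 < 2^-1 by apply: p_range; apply/andP; split; lra.
split; first exact: Kd_pos hA.
move=> ys _.
have hL : (0 < L)%N by apply: leq_ltn_trans hlL.
have [hp0 hs0] := good_prior R L.
have [hpos hsum] := good_fold p_range hL ys hp0 hs0.
exact: (final_bound hL hpos hsum p_range p_mono hl0 hlL).
Qed.
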